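(* (i) For every positive integer $n$, $$s(n):=\frac{2}{n}\sum_{k=1}^n (2k+1)M_k^2\in\mathbb{Z}.$$ (ii) For every prime $p>3$, $$\sum_{k=0}^{p-1}(2k+1)M_k^2\equiv 12p\left(\frac{p}{3}\right)\pmod{p^2}.$$
   Context: For $n\in\mathbb{N}=\{0,1,2,\dots\}$, $M_n$ denotes the Motzkin number $M_n=\sum_{k=0}^{\lfloor n/2\rfloor}\binom{n}{2k}C_k$, where $C_k=\binom{2k}{k}/(k+1)$ is the Catalan number. $\left(\frac{p}{3}\right)$ is the Legendre symbol. *)

(* Defs.v *)
From mathcomp Require Import all_boot all_order all_algebra.
Set Implicit Arguments. Unset Strict Implicit. Unset Printing Implicit Defensive.

(* Catalan number C_k = binom(2k,k)/(k+1) (exact division). *)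
Definition catalan (k : nat) : nat := 'C(k.*2, k) %/ k.+1.

Definition motzkin (n : nat) : nat :=
  \sum_(0 <= k < n./2.+1) 'C(n, k.*2) * catalan k.

Definition legendre3 (a : nat) : int :=
  if a %% 3 == 0 then 0%R else if a %% 3 == 1 then 1%R else (-1)%R.

(* Main.v *)
Require Import Defs.
From mathcomp Require Import all_boot all_order all_algebra.
From mathcomp Require Import ring lra zify.
Import GRing.Theory.

Lemma binrZ m k : ((k.+1 * 'C(m, k.+1))%N%:Z = (m%:Z - k%:Z) * ('C(m, k))%:Z)%R.
Proof.
case: (leqP k m) => hk.
  by rewrite mul_bin_left PoszM -subzn.
by rewrite !bin_small // ?mulr0 ?muln0 // ltnW.
Qed.

Lemma keyE m i :
  ((m+4)%:Z * ('C(m.+2, i.*2.+2))%:Z - (2 * m + 5)%:Z * ('C(m.+1, i.*2.+2))%:Z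
    - (3 * (m + 1))%:Z * ('C(m, i.*2.+2))%:Z
  = -4 * (i.*2.+3)%:Z * ('C(m.+1, i.*2.+3))%:Z + (i.*2.+4)%:Z * ('C(m.+1, i.*2.+1))%:Z)%R.
Proof.
have h1 := binrZ m (i.*2.+2).
have h2 := binrZ m (i.*2).
rewrite !binS !PoszD.
rewrite !PoszD !PoszM in h1 h2 *.
set b1 := Posz 'C(m, _.+3) in h1 *.
set b0 := Posz 'C(m, _.+2) in h1 *.
set b_1 := Posz 'C(m, _.+1) in h2 *.
set b_2 := Posz 'C(m, _) in h2 *.
set ii := Posz i.*2 in h1 h2 *.
lia.
Qed.


Lemma catalanE k : catalan k * k.+1 = 'C(k.*2, k).
Proof.
rewrite /catalan divnK //.
have h := mul_bin_left k.*2 k.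
rewrite -addnn addnK in h.
rewrite -addnn; apply/dvdnP; exists ('C(k + k, k) - 'C(k + k, k.+1)).
rewrite mulnBl; nia.
Qed.

Lemma binC2 k : 'C(k.+1.*2, k.+1) = 2 * k.*2.+1 * catalan k.
Proof.
apply/eqP; rewrite -(eqn_pmul2r (ltn0Sn k)) -mulnA catalanE.
rewrite doubleS binS.
have hs : 'C(k.*2.+1, k) = 'C(k.*2.+1, k.+1).
  rewrite -bin_sub; last by rewrite -addnn; lia.
  congr 'C(_, _); rewrite -addnn; lia.
have hd := mul_bin_diag k.*2.+1 k; simpl in hd.
rewrite -hs; apply/eqP; nia.
Qed.

Definition Gc (n k : nat) : int :=
  match k with 0 => 0%R | k'.+1 => (-2 * ('C(n, k'.*2.+1) * 'C(k.*2, k))%:Z)%R end.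

Lemma term_id m k :
  (((m.+1)+3)%:Z * ('C(m.+2, k.*2) * catalan k)%:Z
   - (2 * m.+1 + 3)%:Z * ('C(m.+1,k.*2) * catalan k)%:Z
   - (3 * m.+1)%:Z * ('C(m, k.*2) * catalan k)%:Z
   = Gc m.+1 k.+1 - Gc m.+1 k)%R.
Proof.
case: k => [|i].
  rewrite /Gc /= !bin0 (_ : catalan 0 = 1) // !bin1 subr0.
  lia.
rewrite /Gc binC2 -catalanE !doubleS.
have E := congr1 (fun x => (Posz (catalan i.+1)) * x)%R (keyE m i).
simpl in E.
rewrite !PoszM !PoszD in E *.
lia.
Qed.

Lemma motzkin_ext n N : n./2 < N -> motzkin n = \sum_(0 <= k < N) 'C(n, k.*2) * catalan k.
Proof.
move=> hN; rewrite /motzkin [RHS](big_cat_nat _ (n := n./2.+1)) //=.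
rewrite [X in _ + X]big_nat_cond [X in _ + X]big1 ?addn0 // => k /andP[/andP[hk _] _].
by rewrite bin_small ?mul0n // -ltn_half_double.
Qed.

Lemma PoszSum (r : seq nat) (F : nat -> nat) :
  Posz (\sum_(k <- r) F k) = (\sum_(k <- r) Posz (F k))%R.
Proof. exact: (big_morph Posz PoszD (erefl _)). Qed.

Lemma motzkin_rec m :
  ((m.+1 + 3) * motzkin m.+2 = (2 * m.+1 + 3) * motzkin m.+1 + 3 * m.+1 * motzkin m)%N.
Proof.
apply/eqP; rewrite -eqz_nat; apply/eqP; rewrite PoszD !PoszM.
apply/eqP; rewrite -subr_eq0 opprD addrA; apply/eqP.
rewrite (@motzkin_ext m.+2 m.+3); last by rewrite ltn_half_double -addnn; lia.
rewrite (@motzkin_ext m.+1 m.+3); last by rewrite ltn_half_double -addnn; lia.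
rewrite (@motzkin_ext m m.+3); last by rewrite ltn_half_double -addnn; lia.
rewrite !PoszSum !big_distrr /= -!sumrB.
rewrite (eq_bigr (fun k => Gc m.+1 k.+1 - Gc m.+1 k)%R); last first.
  by move=> k _; rewrite -term_id !PoszM.
rewrite telescope_sumr // /Gc subr0 bin_small ?mulr0 ?mul0n //.
rewrite -addnn; lia.
Qed.


Lemma motzkin1 : motzkin 1 = 1.
Proof. by rewrite /motzkin big_nat1. Qed.
Lemma motzkin0 : motzkin 0 = 1.
Proof. by rewrite /motzkin big_nat1. Qed.

Definition Mz k : int := Posz (motzkin k).

Lemma motzkin_rec' m : ((m + 4) * motzkin m.+2 = (2 * m + 5) * motzkin m.+1 + 3 * (m + 1) * motzkin m)%N.
Proof.
have h := motzkin_rec m.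
have e1 : (m + 4 = m.+1 + 3)%N by rewrite addSnnS.
have e2 : (2 * m + 5 = 2 * m.+1 + 3)%N by lia.
have e3 : (3 * (m + 1) = 3 * m.+1)%N by rewrite addn1.
by rewrite e1 e2 e3.
Qed.

Lemma MzRec n : ((Posz n + 4) * Mz n.+2 = (2 * Posz n + 5) * Mz n.+1 + 3 * (Posz n + 1) * Mz n)%R.
Proof.
have h := congr1 Posz (motzkin_rec' n).
rewrite /Mz; move: h; rewrite !PoszD !PoszM; move=> ->.
reflexivity.
Qed.

Definition Sp n : int := (\sum_(0 <= k < n.+1) Posz ((2 * k + 1) * motzkin k ^ 2)%N)%R.

Definition Qf (n : nat) : int :=
  let z := Posz n in
  (- 9 * (z + 1) ^+ 2 * (4 * z + 9) * Mz n ^+ 2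
   + 6 * (z + 1) * (z + 3) * (4 * z + 7) * Mz n * Mz n.+1
   - (z + 3) ^+ 2 * (4 * z + 5) * Mz n.+1 ^+ 2)%R.

Definition Qf_expr (z m0 m1 : int) : int :=
  (- 9 * (z + 1) ^+ 2 * (4 * z + 9) * m0 ^+ 2
   + 6 * (z + 1) * (z + 3) * (4 * z + 7) * m0 * m1
   - (z + 3) ^+ 2 * (4 * z + 5) * m1 ^+ 2)%R.

Lemma quad_step (z x y w : int) :
  ((z + 4) * x = (2 * z + 5) * y + 3 * (z + 1) * w ->
  4 + Qf_expr z w y + 4 * (2 * z + 3) * y ^+ 2 = 4 + Qf_expr (z + 1) y x)%R.
Proof.
move=> h; rewrite /Qf_expr.
have -> : (- 9 * (z + 1 + 1) ^+ 2 * (4 * (z + 1) + 9) * y ^+ 2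
   + 6 * (z + 1 + 1) * (z + 1 + 3) * (4 * (z + 1) + 7) * y * x
   - (z + 1 + 3) ^+ 2 * (4 * (z + 1) + 5) * x ^+ 2
   = - 9 * (z + 2) ^+ 2 * (4 * z + 13) * y ^+ 2
     + 6 * (z + 2) * (4 * z + 11) * y * ((z + 4) * x)
     - (4 * z + 9) * ((z + 4) * x) ^+ 2)%R by ring.
rewrite h; ring.
Qed.

Lemma PoszX m n : Posz (m ^ n) = ((Posz m) ^+ n)%R.
Proof. by rewrite -!natz natrX. Qed.

Lemma quad n : (4 * Sp n = 4 + Qf_expr (Posz n) (Mz n) (Mz n.+1))%R.
Proof.
elim: n => [|n IH].
  by rewrite /Sp big_nat1 /Qf_expr /Mz motzkin0 motzkin1.
rewrite /Sp big_nat_recr //= -/(Sp n) mulrDr IH.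
rewrite (_ : Posz n.+1 = Posz n + 1)%R; last by rewrite intS addrC.
rewrite -(@quad_step _ _ _ _ (MzRec n)).
rewrite PoszM PoszX PoszD PoszM intS /Mz.
ring.
Qed.

Lemma two_dvd_sq (d : int) : (2 %| (d * d)%R)%Z -> (2 %| d)%Z.
Proof.
rewrite !dvdzE abszM => h.
by have := (Euclid_dvdM (absz d) (absz d) (isT : prime 2)); rewrite h orbb => <-.
Qed.

Lemma part1 n : 0 < n -> (n %| 2 * \sum_(1 <= k < n.+1) (2 * k + 1) * motzkin k ^ 2)%N.
Proof.
case: n => // m _.
set T := \sum_(1 <= k < m.+2) _.
have hS : Sp m.+1 = (1 + Posz T)%R.
  by rewrite /Sp -PoszSum big_ltn // motzkin0 /= PoszD.
have hq := quad m.+1; rewrite hS mulrDr mulr1 in hq.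
have hT : (4 * Posz T = Qf_expr m.+1 (Mz m.+1) (Mz m.+2))%R by apply: (@addrI _ 4%R).
have R := MzRec m.
set z := Posz m.+1.
have hz : z = (Posz m + 1)%R by rewrite /z intS addrC.
set u := (3 * (z + 1) * Mz m.+1)%R.
set v := ((z + 3) * Mz m.+2)%R.
set w := (Mz m.+1 - 3 * Mz m)%R.
set d := (z * w)%R.
have hd : (u - v = d)%R.
  rewrite /u /v /d /w hz.
  have -> : ((Posz m + 1 + 3) * Mz m.+2 = (Posz m + 4) * Mz m.+2)%R by ring.
  rewrite R; ring.
have hQ : Qf_expr z (Mz m.+1) (Mz m.+2) = (-(4 * z + 5) * d ^+ 2 - 4 * u * d)%R.
  have -> : Qf_expr z (Mz m.+1) (Mz m.+2) = (-(4 * z + 9) * u ^+ 2 + 2 * (4 * z + 7) * u * v - (4 * z + 5) * v ^+ 2)%R.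
    by rewrite /Qf_expr /u /v; ring.
  have -> : v = (u - d)%R by rewrite -hd; ring.
  ring.
rewrite -/z hQ in hT.
have ev : (2 %| d)%Z.
  apply: two_dvd_sq; apply/dvdzP; exists (- 2 * (Posz T + u * d) - 2 * (z + 1) * d ^+ 2)%R.
  have -> : (d * d = (4 * z + 5) * d ^+ 2 - 4 * (z + 1) * d ^+ 2)%R by ring.
  have -> : ((4 * z + 5) * d ^+ 2 = - (4 * Posz T) - 4 * u * d)%R by rewrite hT; ring.
  ring.
case/dvdzP: ev => q hdq.
have hT2 : Posz T = (-(4 * z + 5) * q ^+ 2 - 2 * u * q)%R.
  apply: (@mulfI _ 4%R) => //; rewrite hT hdq; ring.
suff : (z %| Posz (2 * T))%Z by [].
apply/dvdzP; exists (w * (-(4 * z + 5) * q - 2 * u))%R.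
rewrite PoszM hT2.
have -> : (w * (-(4 * z + 5) * q - 2 * u) * z = d * (-(4 * z + 5) * q - 2 * u))%R.
  by rewrite /d; ring.
rewrite hdq; ring.
Qed.

Lemma PoszSumI (I : Type) (r : seq I) (Pr : pred I) (F : I -> nat) :
  Posz (\sum_(k <- r | Pr k) F k) = (\sum_(k <- r | Pr k) Posz (F k))%R.
Proof. exact: (big_morph Posz PoszD (erefl _)). Qed.

Definition Pp : {poly int} := ('X + 1 + 'X^2)%R.

Lemma coefX1n q d : ((('X + 1 : {poly int}) ^+ q)`_d = Posz 'C(q, d))%R.
Proof.
elim: q d => [|q IH] d.
  by rewrite expr0 coef1 bin0n; case: d.
rewrite exprSr mulrDr mulr1 coefD coefMX; case: d => [|d] /=.
  by rewrite add0r IH !bin0.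
by rewrite !IH binS PoszD addrC.
Qed.

Lemma coefPp m j : ((Pp ^+ m)`_j =
  Posz (\sum_(i < m.+1) (if j < i.*2 then 0 else 'C(m, i) * 'C(m - i, j - i.*2))))%R.
Proof.
rewrite /Pp exprDn coef_sum PoszSumI; apply: eq_bigr => i _.
rewrite coefMn -exprM coefMXn mul2n.
case: ifP => _; first by rewrite mul0rn.
rewrite coefX1n; elim: ('C(m, i)) => [|k IHk]; first by rewrite mulr0n.
by rewrite mulrS IHk mulSn PoszD.
Qed.

Lemma term_link n i : i.*2 <= n ->
  'C(n.+1, i) * 'C(n.+1 - i, n - i.*2) = n.+1 * ('C(n, i.*2) * catalan i).
Proof.
move=> hi.
have hK : 0 < i`! * ((n - i.*2)`! * i.+1`!) by rewrite !muln_gt0 !fact_gt0.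
apply/eqP; rewrite -(eqn_pmul2r hK); apply/eqP.
have e1 : 'C(n.+1, i) * (i`! * (n.+1 - i)`!) = n.+1`!.
  by apply: bin_fact; rewrite -addnn in hi; lia.
have e2 : 'C(n.+1 - i, n - i.*2) * ((n - i.*2)`! * i.+1`!) = (n.+1 - i)`!.
  have -> : i.+1 = n.+1 - i - (n - i.*2) by rewrite -addnn in hi *; lia.
  by apply: bin_fact; rewrite -addnn in hi *; lia.
have e3 := catalanE i.
have e4 : 'C(i.*2, i) * (i`! * i`!) = (i.*2)`!.
  have h2i : i.*2 - i = i by rewrite -addnn addnK.
  have hle : i <= i.*2 by rewrite -addnn leq_addl.
  by move: (bin_fact hle); rewrite h2i.
have e5 : 'C(n, i.*2) * ((i.*2)`! * (n - i.*2)`!) = n`!.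
  by apply: bin_fact.
have -> : 'C(n.+1, i) * 'C(n.+1 - i, n - i.*2) * (i`! * ((n - i.*2)`! * i.+1`!))
   = 'C(n.+1, i) * (i`! * ('C(n.+1 - i, n - i.*2) * ((n - i.*2)`! * i.+1`!))) by lia.
rewrite e2 e1.
have -> : n.+1 * ('C(n, i.*2) * catalan i) * (i`! * ((n - i.*2)`! * i.+1`!))
   = n.+1 * ('C(n, i.*2) * (((catalan i * i.+1) * (i`! * i`!)) * (n - i.*2)`!)).
  rewrite factS; lia.
by rewrite e3 e4 e5 factS.
Qed.

Lemma coefPp_motz n : ((Pp ^+ n.+1)`_n = Posz (n.+1 * motzkin n))%R.
Proof.
rewrite coefPp; congr Posz.
rewrite -(big_mkord xpredT (fun i => if n < i.*2 then 0 else 'C(n.+1, i) * 'C(n.+1 - i, n - i.*2))).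
rewrite (big_cat_nat _ (n := n./2.+1)) //=; last first.
  by rewrite ltnS leq_half_double; lia.
rewrite [X in _ + X]big_nat_cond [X in _ + X]big1 ?addn0; last first.
  by move=> k /andP[/andP[hk _] _]; rewrite -ltn_half_double hk.
rewrite /motzkin big_distrr /=; apply: eq_big_nat => i /andP[_ hi].
have hi2 : i.*2 <= n by rewrite -geq_half_double -ltnS.
by rewrite ltnNge hi2 /= term_link.
Qed.

Definition aa p j : int := (Pp ^+ p)`_j.

Lemma derivPp : (Pp^`() = 1 + 'X *+ 2)%R.
Proof. by rewrite /Pp !derivD derivX derivXn -polyC1 derivC addr0 expr1. Qed.

Lemma deriv_id p : (Pp * (Pp ^+ p)^`() = (Pp ^+ p) * Pp^`() *+ p)%R.
Proof.
rewrite deriv_exp; case: p => [|p]; first by rewrite !mulr0n mulr0.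
rewrite /= exprS.
by rewrite mulrnAr; congr (_ *+ _)%R; ring.
Qed.

Lemma natmulz (x : int) n : (x *+ n = Posz n * x)%R.
Proof. by rewrite -mulr_natl natz. Qed.

Lemma coefPpM (q : {poly int}) k : ((Pp * q)`_k.+2 = q`_k.+1 + q`_k.+2 + q`_k)%R.
Proof.
by rewrite /Pp !mulrDl mul1r !coefD coefXM coefXnM /= subn2.
Qed.

Lemma coefPpM1 (q : {poly int}) : ((Pp * q)`_1 = q`_0 + q`_1)%R.
Proof. by rewrite /Pp !mulrDl mul1r !coefD coefXM coefXnM /= addr0. Qed.

Lemma coefPpM0 (q : {poly int}) : ((Pp * q)`_0 = q`_0)%R.
Proof. by rewrite /Pp !mulrDl mul1r !coefD coefXM coefXnM /= add0r addr0. Qed.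

Lemma coefMdPp (q : {poly int}) k : ((q * Pp^`())`_k.+1 = q`_k.+1 + 2 * q`_k)%R.
Proof. by rewrite derivPp mulrDr mulr1 coefD mulrnAr coefMn coefMX /= natmulz. Qed.

Lemma coefMdPp0 (q : {poly int}) : ((q * Pp^`())`_0 = q`_0)%R.
Proof. by rewrite derivPp mulrDr mulr1 coefD mulrnAr coefMn coefMX /= mul0rn addr0. Qed.

Lemma Rrec p i : (Posz i.+3 * aa p i.+3 + Posz i.+2 * aa p i.+2 + Posz i.+1 * aa p i.+1
   = Posz p * (aa p i.+2 + 2 * aa p i.+1))%R.
Proof.
have := congr1 (fun q : {poly int} => (q`_i.+2)%R) (deriv_id p); rewrite /= coefPpM coefMn coefMdPp.
rewrite !coef_deriv !natmulz /aa => h; rewrite -h; ring.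
Qed.

Lemma Rrec1 p : (2 * aa p 2 + aa p 1 = Posz p * (aa p 1 + 2 * aa p 0))%R.
Proof.
have := congr1 (fun q : {poly int} => (q`_1)%R) (deriv_id p); rewrite /= coefPpM1 coefMn coefMdPp.
rewrite !coef_deriv !natmulz /aa => h; rewrite -h; ring.
Qed.

Lemma Rrec0 p : (aa p 1 = Posz p * aa p 0)%R.
Proof.
have := congr1 (fun q : {poly int} => (q`_0)%R) (deriv_id p); rewrite /= coefPpM0 coefMn coefMdPp0.
rewrite !coef_deriv !natmulz /aa => h; rewrite -h; ring.
Qed.

Lemma aa0 p : aa p 0 = 1%R.
Proof.
by rewrite /aa coefPp big_ord_recl /= big1 ?bin0 // => i _.
Qed.

Definition eps (j : nat) : int := if j %% 3 == 0 then (-2)%R else 1%R.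

Lemma eps_mod j : eps j = eps (j %% 3).
Proof. by rewrite /eps modn_mod. Qed.

Lemma eps3 t : (eps t.+2 + eps t.+1 + eps t = 0)%R.
Proof.
rewrite (eps_mod t.+2) (eps_mod t.+1) (eps_mod t).
rewrite -[t.+2]addn2 -[t.+1]addn1 -(modnDml t 1) -(modnDml t 2).
move: (ltn_pmod t (isT : 0 < 3)); case: (t %% 3) => [|[|[|r]]] //= _.
Qed.

Definition EE p m : int := (\sum_(j < m.+1) aa p j * eps (m - j).+1)%R.

Lemma EES p m : EE p m.+1 = (\sum_(j < m.+1) aa p j * eps (m.+1 - j).+1 + aa p m.+1)%R.
Proof. by rewrite /EE big_ord_recr /= subnn /eps /= mulr1. Qed.

Lemma EErec p i : (EE p i.+2 + EE p i.+1 + EE p i = aa p i.+2 + 2 * aa p i.+1)%R.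
Proof.
have z : (\sum_(j < i.+1) aa p j * eps (i.+2 - j).+1 + \sum_(j < i.+1) aa p j * eps (i.+1 - j).+1
   + \sum_(j < i.+1) aa p j * eps (i - j).+1 = 0)%R.
  rewrite -!big_split /= big1 // => j _; rewrite -!mulrDr.
  have hj : (j <= i)%N by rewrite -ltnS.
  rewrite !subSn // ?leqW //.
  by rewrite eps3 mulr0.
rewrite !EES big_ord_recr /= subSnn.
rewrite -/(EE p i).
move: z; rewrite -/(EE p i).
set A := (\sum_(j < i.+1) (aa p j * eps (i.+2 - j).+1))%R.
set B := (\sum_(j < i.+1) (aa p j * eps (i.+1 - j).+1))%R.
rewrite /eps /= => z.
lra.
Qed.

Lemma DpE p m : (Posz m.+1 * aa p m.+1 = Posz p * EE p m)%R.
Proof.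
suff : forall m, (Posz m.+1 * aa p m.+1 = Posz p * EE p m)%R /\
                 (Posz m.+2 * aa p m.+2 = Posz p * EE p m.+1)%R by case/(_ m).
clear m; elim=> [|m [IH1 IH2]].
  have h0 := Rrec0 p; have h1 := Rrec1 p; rewrite aa0 in h0 h1.
  rewrite EES /EE !big_ord1 /= aa0 /eps /=.
  split; first by rewrite mul1r h0 mulr1 mul1r.
  rewrite h0 mulr1 in h1 *.
  rewrite (_ : Posz 2 = 2%R) //.
  apply: (@addIr _ (Posz p)); rewrite h1; ring.
split => //.
have R := Rrec p m.
have E := EErec p m.
apply: (@addIr _ (Posz m.+2 * aa p m.+2 + Posz m.+1 * aa p m.+1)%R).
rewrite addrA R IH2 IH1 -E; ring.
Qed.

Lemma ap_EE p : 0 < p -> aa p p = EE p p.-1.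
Proof.
case: p => // p _.
have := DpE p.+1 p; move/(mulfI _) => h; apply: h => //.
Qed.

Section GPart.
Local Open Scope ring_scope.

Lemma intrP (R : pzRingType) n : ((Posz n)%:~R : R) = n%:R.
Proof. by []. Qed.

Definition al p j : int := (aa p j %/ Posz p)%Z.

Lemma natFp_neq0 p j : prime p -> (0 < j < p)%N -> (j%:R : 'F_p) != 0%R.
Proof.
move=> pr /andP[j0 jp]; rewrite -(dvdn_pcharf (pchar_Fp pr)).
by rewrite gtnNdvd.
Qed.

Lemma natFp_p p : prime p -> (p%:R : 'F_p) = 0%R.
Proof. by move=> pr; apply: pchar_Fp_0. Qed.

Lemma dvdFp p (x : int) : prime p -> (Posz p %| x)%Z = (x%:~R == 0 :> 'F_p)%R.
Proof. by move=> pr; rewrite (dvdz_pcharf (pchar_Fp pr)). Qed.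

Lemma alpha_facts p : prime p -> (2 < p)%N -> forall j, (0 < j < p)%N ->
  (Posz p %| aa p j)%Z /\ (((al p j)%:~R * j%:R : 'F_p) = (eps j)%:~R)%R.
Proof.
move=> pr p2.
have p0 : (0 < p)%N by apply: prime_gt0.
have pz : (Posz p != 0)%R by rewrite eqz_nat -lt0n.
elim/ltn_ind => j IH /andP[j0 jp].
case: j j0 jp IH => [//|[|[|i]]] _ jp IH.
- rewrite /al Rrec0 aa0 mulr1 divzz pz /= dvdzz; split => //.
  by rewrite /eps /= mulr1.
- have h1 := Rrec1 p; rewrite Rrec0 aa0 mulr1 in h1.
  have e : (2 * aa p 2 = Posz p * (Posz p + 1))%R.
    by apply: (@addIr _ (Posz p)); rewrite h1; ring.
  have d2 : (Posz p %| aa p 2)%Z.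
    rewrite dvdFp //.
    have := congr1 (fun x : int => (x%:~R : 'F_p)) e; rewrite /= !intrM intrP natFp_p // mul0r.
    move/eqP; rewrite mulf_eq0 => /orP[|//].
    move=> /eqP h2; exfalso; move: (@natFp_neq0 p 2 pr p2).
    by move=> /eqP; apply; rewrite -h2.
  split => //.
  rewrite /al; move: (divzK d2) e => <-.
  set q := (aa p 2 %/ Posz p)%Z => e.
  have e' : (q * 2 = Posz p + 1)%R.
    apply: (@mulIf _ (Posz p)) => //.
    have -> : q * 2 * Posz p = 2 * (q * Posz p) by ring.
    rewrite e; ring.
  have := congr1 (fun x : int => (x%:~R : 'F_p)) e'; rewrite /= !intrM intrD intrP /=.
  rewrite natFp_p // add0r mulzK // => h.

have [d2 f2] := IH i.+2 (ltnSn _) (ltn_trans (ltnSn _) jp).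
have [d1 f1] := IH i.+1 (ltnW (ltnSn _)) (ltn_trans (ltnSn _) (ltn_trans (ltnSn _) jp)).
have R := Rrec p i.
move: (divzK d2) (divzK d1) R f2 f1; rewrite /al.
set q2 := (aa p i.+2 %/ p)%Z; set q1 := (aa p i.+1 %/ p)%Z => <- <- R f2 f1.
set X := (Posz p * (q2 + 2 * q1) - Posz i.+2 * q2 - Posz i.+1 * q1).
have e : Posz i.+3 * aa p i.+3 = X * Posz p.
  by apply: (@addIr _ (Posz i.+2 * (q2 * Posz p) + Posz i.+1 * (q1 * Posz p))); rewrite addrA R /X; ring.
have ni3 : (i.+3%:R : 'F_p) != 0 by apply: natFp_neq0.
have d3 : (Posz p %| aa p i.+3)%Z.
  rewrite dvdFp //.
  have := congr1 (fun x : int => (x%:~R : 'F_p)) e; rewrite /= !intrM !intrP natFp_p // mulr0.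
  by move/eqP; rewrite mulf_eq0 (negbTE ni3).
split => //.
move: (divzK d3) e => <-; set q3 := (aa p i.+3 %/ p)%Z => e.
have e' : Posz i.+3 * q3 = X.
  by apply: (@mulIf _ (Posz p)) => //; rewrite -e; ring.
have := congr1 (fun x : int => (x%:~R : 'F_p)) e'; rewrite /= /X !intrM !intrB !intrM !intrD !intrM !intrP natFp_p // mul0r sub0r.
move=> h; rewrite mulzK // mulrC h.
rewrite [_ * q2%:~R]mulrC [_ * q1%:~R]mulrC f2 f1.
have := eps3 i.+1; move/(congr1 (fun x : int => (x%:~R : 'F_p))); rewrite /= !intrD mulr0z.
move=> h3; symmetry; apply: (@addIr _ ((eps i.+2)%:~R + (eps i.+1)%:~R)); rewrite addrA h3; ring.
Qed.

Definition nu p : int := \sum_(1 <= j < p) al p j * eps (p - j).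

Lemma eps_p p : prime p -> (3 < p)%N -> eps p = 1.
Proof.
move=> pr p3; rewrite /eps; case: eqP => // /eqP h.
have : (3 %| p)%N by rewrite /dvdn h.
by rewrite dvdn_prime2 // => /eqP h3; move: p3; rewrite -h3.
Qed.

Lemma ap_nu p : prime p -> (3 < p)%N -> aa p p = 1 + Posz p * nu p.
Proof.
move=> pr p3.
have p2 : (2 < p)%N by apply: ltn_trans p3.
rewrite ap_EE ?prime_gt0 //.
case: p pr p3 p2 => [//|p'] pr p3 p2 /=.
rewrite /EE big_ord_recl /= aa0 subn0 (@eps_p _ pr p3) mul1r.
congr (_ + _).
rewrite /nu big_add1 /= big_mkord mulr_sumr; apply: eq_bigr => j _.
have hj : (0 < (bump 0 j) < p'.+1)%N by rewrite /bump /= add1n ltnS ltn_ord.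
have [d _] := @alpha_facts p'.+1 pr p2 _ hj.
rewrite -{1}(divzK d) /al /bump /= add1n subSS.
rewrite subnSK //; ring.
Qed.

Lemma intr_sum (F : nat -> int) (r : seq nat) (R : pzRingType) :
  ((\sum_(j <- r) F j)%:~R : R) = \sum_(j <- r) (F j)%:~R.
Proof. exact: (big_morph _ (@intrD R) (mulr0z 1)). Qed.

Lemma nu0 p : prime p -> (2 < p)%N -> ((nu p)%:~R : 'F_p) = 0.
Proof.
move=> pr p2.
set g := fun j : nat => ((eps j)%:~R * (eps (p - j))%:~R / j%:R : 'F_p).
have e : ((nu p)%:~R : 'F_p) = \sum_(1 <= j < p) g j.
  rewrite /nu intr_sum; apply: eq_big_nat => j hj.
  have [_ f] := @alpha_facts p pr p2 j hj.
  have nj := @natFp_neq0 p j pr hj.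
  have fa : ((al p j)%:~R : 'F_p) = (eps j)%:~R / j%:R by rewrite -f mulfK.
  by rewrite intrM fa /g mulrAC.
have e2 : \sum_(1 <= j < p) g j = - \sum_(1 <= j < p) g j.
  rewrite [LHS]big_nat_rev -sumrN; apply: eq_big_nat => k /andP[k1 kp].
  have hk : (1 + p - k.+1 = p - k)%N by rewrite add1n subSS.
  rewrite hk /g (subKn (ltnW kp)).
  have hn : ((p - k)%:R : 'F_p) = - k%:R by rewrite (natrB _ (ltnW kp)) natFp_p // sub0r.
  rewrite hn invrN mulrN mulrC.
  by congr (- _); rewrite mulrC; congr (_ * _); rewrite mulrC.
rewrite e; apply/eqP; move/eqP: e2; rewrite -subr_eq0 opprK -mulr2n -mulr_natr.
rewrite mulf_eq0 => /orP[//|].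
by rewrite (negbTE (@natFp_neq0 p 2 pr p2)).
Qed.

End GPart.

Lemma Zid (P x mu l : int) :
  (4 + Qf_expr (P - 1) x (1 + P * mu) - 48 * P * l
   = P * (36 * x - 20 - 8 * mu - 48 * l)
     + P ^+ 2 * (-9 * (4 * P + 5) * x ^+ 2
                 + 6 * x * (4 * P + 11 + 6 * mu + 4 * P ^+ 2 * mu + 11 * P * mu)
                 - (4 * P + 17 + 8 * P ^+ 2 * mu + 34 * P * mu + 40 * mu
                    + mu ^+ 2 * (4 * P ^+ 3 + 17 * P ^+ 2 + 20 * P + 4))))%R.
Proof. rewrite /Qf_expr; ring. Qed.

Lemma fp_to_dvd p (a b : int) : prime p -> ((a%:~R : 'F_p) = b%:~R)%R -> exists c, (a - b = c * Posz p)%R.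
Proof.
move=> pr h; apply/dvdzP; rewrite dvdFp // intrB h subrr //.
Qed.

Lemma coprime_p_small p k : prime p -> (k < p)%N -> (0 < k)%N -> coprime p k.
Proof.
move=> pr kp k0; rewrite prime_coprime //; apply/negP => /(dvdn_leq k0); lia.
Qed.

Lemma bracket m : prime m.+2 -> (3 < m.+2)%N ->
  (-56 * eps m.+1 - 24 + 8 * eps m - 96 * legendre3 m.+2 = 0)%R.
Proof.
move=> pr p3.
have h3 : m.+2 %% 3 != 0.
  apply/negP => /eqP h.
  have : (3 %| m.+2)%N by rewrite /dvdn h.
  by rewrite dvdn_prime2 // => /eqP h3; move: p3; rewrite -h3.
move: h3; rewrite /eps /legendre3 (divn_eq m 3).
move: (ltn_pmod m (isT : 0 < 3)); set q := m %/ 3; case: (m %% 3) => [|[|[|r]]] //= _.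
- by rewrite -!addnS !modnMDl.
- by rewrite -!addnS !modnMDl.
- by rewrite -!addnS !modnMDl.
Qed.

Lemma part2 p : prime p -> 3 < p ->
     ((\sum_(0 <= k < p) ((2 * k + 1) * motzkin k ^ 2)%N%:Z)
        = (12 * p)%N%:Z * legendre3 p %[mod (p ^ 2)%N%:Z])%Z.
Proof.
move=> pr p3.
have p2 : (2 < p)%N by apply: ltn_trans p3.
have p0 : (0 < p)%N by apply: prime_gt0.
have pz : (Posz p != 0)%R by rewrite eqz_nat -lt0n.
case: p pr p3 p2 p0 pz => [//|n] pr p3 p2 p0 pz.
case: n pr p3 p2 p0 pz => [//|m] pr p3 p2 p0 pz.
have hb := @bracket m pr p3.
set P := Posz m.+2.
set x := Mz m.+1.
set y := Mz m.+2.
have hm1 : Posz m.+1 = (P - 1)%R by rewrite /P !intS; ring.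
have hm0 : Posz m = (P - 2)%R by rewrite /P !intS; ring.
have ha1 : aa m.+2 m.+1 = (P * x)%R by rewrite /aa coefPp_motz.
have hal1 : al m.+2 m.+1 = x by rewrite /al ha1 mulKz.
have hmr : (0 < m < m.+2)%N by apply/andP; split => //; lia.
have [_ f1] := @alpha_facts m.+2 pr p2 m.+1 (ltnSn _).
have [d2 f2] := @alpha_facts m.+2 pr p2 m hmr.
set al2 := al m.+2 m.
rewrite hal1 -intrP -intrM in f1.
rewrite -intrP -intrM in f2.
have [c1 hc1] := @fp_to_dvd m.+2 _ _ pr f1.
have [c2 hc2] := @fp_to_dvd m.+2 _ _ pr f2.
have [c3 hc3] : exists c, (nu m.+2 - 0 = c * P)%R.
  by apply: fp_to_dvd => //; rewrite nu0 // mulr0z.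
rewrite subr0 in hc3.
have hap := @ap_nu m.+2 pr p3.
have hMp : ((P + 1) * y = aa m.+2 m.+1 + aa m.+2 m.+2 + aa m.+2 m)%R.
  have := coefPp_motz m.+2; rewrite exprS coefPpM => ->.
  by rewrite /y /Mz PoszM /P intS addrC.
rewrite ha1 hap -(divzK d2) -/al2 in hMp.
set mu := (nu m.+2 + x + al2 - y)%R.
have hy : y = (1 + P * mu)%R.
  have e : (y - (1 + P * mu) = (P + 1) * y - (P * x + (1 + P * nu m.+2) + al2 * P))%R.
    by rewrite /mu; ring.
  by apply/eqP; rewrite -subr_eq0 e hMp subrr.
have hq := quad m.+1.
rewrite hm1 -/x -/y hy in hq.
apply/eqP; rewrite eqz_mod_dvd.
have cop : coprimez (Posz (m.+2 ^ 2)) 8.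
  rewrite coprimezE; change (coprime (m.+2 ^ 2) (2 ^ 3)).
  rewrite coprime_pexpl // coprime_pexpr //.
  by apply: coprime_p_small => //; lia.
rewrite -(Gauss_dvdzr _ cop); apply/dvdzP.
set K := (56 * (x - c1) - 16 * c3 - 8 * (al2 - c2) + 16 * mu)%R.
set Z := (-9 * (4 * P + 5) * x ^+ 2
                 + 6 * x * (4 * P + 11 + 6 * mu + 4 * P ^+ 2 * mu + 11 * P * mu)
                 - (4 * P + 17 + 8 * P ^+ 2 * mu + 34 * P * mu + 40 * mu
                    + mu ^+ 2 * (4 * P ^+ 3 + 17 * P ^+ 2 + 20 * P + 4)))%R.
exists (K + 2 * Z)%R.
have hY : (2 * (36 * x - 20 - 8 * mu - 48 * legendre3 m.+2) = P * K)%R.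
  have e : (2 * (36 * x - 20 - 8 * mu - 48 * legendre3 m.+2) - P * K
     = - 56 * (x * (P - 1) - eps m.+1 - c1 * P) - 16 * (nu m.+2 - c3 * P)
       + 8 * (al2 * (P - 2) - eps m - c2 * P)
       + (-56 * eps m.+1 - 24 + 8 * eps m - 96 * legendre3 m.+2)
       + 16 * (y - (1 + P * mu)))%R.
    by rewrite /K /mu; ring.
  move: e; rewrite hb -hm1 -hm0 hc1 hc2 hc3 hy !subrr; move/eqP.
  by rewrite subr_eq0 => /eqP.
rewrite -/(Sp m.+1) PoszX PoszM -/P.
have -> : (8 * (Sp m.+1 - Posz 12 * P * legendre3 m.+2)
   = 2 * (4 * Sp m.+1 - 48 * P * legendre3 m.+2))%R by ring.
rewrite hq Zid.
have -> : (2 * (P * (36 * x - 20 - 8 * mu - 48 * legendre3 m.+2) + P ^+ 2 * Z)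
   = P * (2 * (36 * x - 20 - 8 * mu - 48 * legendre3 m.+2)) + 2 * P ^+ 2 * Z)%R by ring.
rewrite hY; ring.
Qed.

Theorem theorem1p1 :
  (forall n : nat, 0 < n ->
     n %| 2 * \sum_(1 <= k < n.+1) (2 * k + 1) * motzkin k ^ 2)
  /\
  (forall p : nat, prime p -> 3 < p ->
     ((\sum_(0 <= k < p) ((2 * k + 1) * motzkin k ^ 2)%N%:Z)
        = (12 * p)%N%:Z * legendre3 p %[mod (p ^ 2)%N%:Z])%Z).
Proof.
split; [exact: part1 | exact: part2].
Qed.
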